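(* Let $0<\gamma<\infty$ and $T>0$. Let $(u_1,\omega_1,\psi_1)$ be a classical solution of the system $$\partial_t u_1 + u^r\partial_r u_1 + u^z\partial_z u_1 = 2u_1\partial_z\psi_1,\qquad \partial_t \omega_1 + u^r\partial_r \omega_1 + u^z\partial_z \omega_1 = \partial_z(u_1^2),$$ $$-\Big(\partial_r^2+\frac{3}{r}\partial_r+\partial_z^2\Big)\psi_1=\omega_1,\qquad u^r=-r\partial_z\psi_1,\quad u^z=2\psi_1+r\partial_r\psi_1,$$ in a space-time region $\mathcal{W}$, where $\mathcal{W}$ is either (i) $\mathcal{C}_{\delta,T}=\{(r,z,t): 1-\delta<r<1,\ -\delta<z<\delta,\ T-\delta<t<T\}$ for some $0<\delta\ll 1$, or (ii) $\mathcal{W}_{\delta(t)}=\{(r,z,t): 1-\delta(t)<r<1,\ -\delta(t)<z<\delta(t),\ T_0<t<T\}$ for some $T_0<T$ and some decreasing function $\delta:(T_0,T)\to(0,\infty)$ with $\lim_{t\to T^-}\delta(t)=0$ and $\limsup_{t\to T^-}(T-t)^{-\gamma}\delta(t)=\infty$. Suppose that on $\mathcal{W}$ the solution has the self-similar form $$u_1(r,z,t)=(T-t)^{-1+\frac{\gamma}{2}}U(R,Z),\quad \omega_1(r,z,t)=(T-t)^{-1}\Omega(R,Z),\quad \psi_1(r,z,t)=(T-t)^{-1+2\gamma}\Psi(R,Z),$$ with $R=(r-1)(T-t)^{-\gamma}$, $Z=z(T-t)^{-\gamma}$, where the profiles $U,\Omega,\Psi$ are sufficiently smooth (classical) functions independent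 of $t$ defined on the closed left half-plane $\mathcal{D}=\{(R,Z)\in\mathbb{R}^2: R\le 0\}$. Assume the decay condition: for every fixed $R\le 0$, $$|U(R,Z)|+|\Omega(R,Z)|\to 0\quad\text{as } |Z|\to\infty.$$ Then $u_1\equiv 0$ and $\omega_1\equiv 0$ on $\mathcal{W}$, and there are constants $a,b$ such that $\psi_1(r,z,t)=a(T-t)^{-1+\gamma}z+b(T-t)^{-1+2\gamma}$ there (equivalently $\Psi(R,Z)=aZ+b$ on $\mathcal{D}$).
   Context: This concerns axisymmetric solutions of the 3D incompressible Euler equations in the cylinder $\{0<r<1\}$ in cylindrical coordinates $(r,\theta,z)$, with velocity $u=u^re_r+u^\theta e_\theta+u^ze_z$ independent of $\theta$. Here $u_1=u^\theta/r$, $\omega_1=\omega^\theta/r$, $\psi_1=\psi^\theta/r$, where $\omega^\theta$ is the angular component of the vorticity $\mathrm{curl}\,u$ and $\psi^\theta$ is the angular component of the vector stream function $\psi$ (with $\mathrm{curl}\,\psi=u$, $\mathrm{div}\,\psi=0$). No boundary condition at $r=1$ is assumed. $T$ is a (possible) blow-up time. *)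

(* Defs.v *)
From Stdlib Require Import Reals Lra.
Open Scope R_scope.

Definition contD (f : R -> R -> R) : Prop :=
  forall X Y, X <= 0 -> forall eps, eps > 0 ->
    exists del, del > 0 /\
      forall X' Y', X' <= 0 -> Rabs (X' - X) < del -> Rabs (Y' - Y) < del ->
        Rabs (f X' Y' - f X Y) < eps.

Definition C1D (f fR fZ : R -> R -> R) : Prop :=
  (forall X Y, X < 0 ->
     derivable_pt_lim (fun x => f x Y) X (fR X Y) /\
     derivable_pt_lim (fun y => f X y) Y (fZ X Y)) /\
  contD f /\ contD fR /\ contD fZ.

Definition C2D (f : R -> R -> R) : Prop :=
  exists fR fZ, C1D f fR fZ /\
    (exists fRR fRZ, C1D fR fRR fRZ) /\
    (exists fZR fZZ, C1D fZ fZR fZZ).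

Definition regionC (T d r z t : R) : Prop :=
  1 - d < r < 1 /\ - d < z < d /\ T - d < t < T.

Definition regionW (T T0 : R) (delta : R -> R) (r z t : R) : Prop :=
  T0 < t < T /\ 1 - delta t < r < 1 /\ - delta t < z < delta t.

Definition admissible_delta (gamma T T0 : R) (delta : R -> R) : Prop :=
  (forall t, T0 < t < T -> 0 < delta t) /\
  (forall s t, T0 < s -> s < t -> t < T -> delta t <= delta s) /\
  (forall eps, eps > 0 -> exists eta, eta > 0 /\
     forall t, T0 < t < T -> T - eta < t -> delta t < eps) /\
  (forall M eta, eta > 0 -> exists t, T0 < t < T /\ T - eta < t /\
     Rpower (T - t) (- gamma) * delta t > M).

Definition euler_solution_on (W : R -> R -> R -> Prop)
  (u1 w1 psi1 : R -> R -> R -> R) : Prop :=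
  exists psir psiz : R -> R -> R -> R,
  forall r z t, W r z t ->
    exists ut ur uz wt wr wz u2z prr pzz : R,
      derivable_pt_lim (fun s => u1 r z s) t ut /\
      derivable_pt_lim (fun x => u1 x z t) r ur /\
      derivable_pt_lim (fun y => u1 r y t) z uz /\
      derivable_pt_lim (fun s => w1 r z s) t wt /\
      derivable_pt_lim (fun x => w1 x z t) r wr /\
      derivable_pt_lim (fun y => w1 r y t) z wz /\
      derivable_pt_lim (fun y => (u1 r y t) ^ 2) z u2z /\
      derivable_pt_lim (fun x => psi1 x z t) r (psir r z t) /\
      derivable_pt_lim (fun y => psi1 r y t) z (psiz r z t) /\
      derivable_pt_lim (fun x => psir x z t) r prr /\
      derivable_pt_lim (fun y => psiz r y t) z pzz /\
      (let vr := - r * psiz r z t in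
       let vz := 2 * psi1 r z t + r * psir r z t in
       ut + vr * ur + vz * uz = 2 * u1 r z t * psiz r z t /\
       wt + vr * wr + vz * wz = u2z /\
       - (prr + 3 / r * psir r z t + pzz) = w1 r z t).

(* Main.v *)
Require Import Defs.
From Stdlib Require Import Reals Lra.
Open Scope R_scope.

Lemma deriv_left_uniq f g x l l' e : 0 < e ->
  (forall y, x - e < y <= x -> f y = g y) ->
  derivable_pt_lim f x l -> derivable_pt_lim g x l' -> l = l'.
Proof.
  intros He Heq Hf Hg.
  destruct (Req_dec l l') as [|Hne]; auto. exfalso.
  assert (Hp : 0 < Rabs (l - l') / 2).
  { assert (0 < Rabs (l - l')) by (apply Rabs_pos_lt; lra). lra. }
  destruct (Hf _ Hp) as [d1 Hd1]. destruct (Hg _ Hp) as [d2 Hd2].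
  pose proof (cond_pos d1). pose proof (cond_pos d2).
  set (m := Rmin (Rmin d1 d2) e).
  assert (Hm1 : m <= d1) by (unfold m; eapply Rle_trans; [apply Rmin_l|apply Rmin_l]).
  assert (Hm2 : m <= d2) by (unfold m; eapply Rle_trans; [apply Rmin_l|apply Rmin_r]).
  assert (Hm3 : m <= e) by (unfold m; apply Rmin_r).
  assert (Hm0 : 0 < m) by (unfold m; repeat apply Rmin_pos; lra).
  set (h := - m / 2).
  assert (hne : h <> 0) by (unfold h; lra).
  assert (habs : Rabs h = m/2) by (unfold h; rewrite Rabs_left; lra).
  specialize (Hd1 h hne ltac:(rewrite habs; lra)).
  specialize (Hd2 h hne ltac:(rewrite habs; lra)).
  rewrite (Heq (x+h)) in Hd1 by (unfold h; lra).
  rewrite (Heq x) in Hd1 by lra.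
  set (q := (g (x + h) - g x) / h) in *.
  assert (Rabs (l - l') <= Rabs (q - l) + Rabs (q - l')).
  { replace (l - l') with (-(q - l) + (q - l')) by ring.
    eapply Rle_trans; [apply Rabs_triang|]. rewrite Rabs_Ropp. lra. }
  lra.
Qed.

Lemma deriv_loc_uniq f g x l l' e : 0 < e ->
  (forall y, Rabs (y - x) < e -> f y = g y) ->
  derivable_pt_lim f x l -> derivable_pt_lim g x l' -> l = l'.
Proof.
  intros He Heq. apply (deriv_left_uniq f g x l l' e He).
  intros y Hy. apply Heq. rewrite Rabs_left1; lra.
Qed.

Lemma const_deriv0 f a b : a <= b ->
  (forall x, a <= x <= b -> derivable_pt_lim f x 0) -> f b = f a.
Proof.
  intros Hab Hd.
  set (pr := fun x (P : a < x < b) => exist (fun l => derivable_pt_lim f x l) 0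
                (Hd x (conj (Rlt_le _ _ (proj1 P)) (Rlt_le _ _ (proj2 P))))).
  assert (Hc : forall x, a <= x <= b -> continuity_pt f x).
  { intros x Hx. apply derivable_continuous_pt. exists 0. apply Hd; auto. }
  pose proof (null_derivative_loc f a b pr Hc (fun x P => eq_refl)) as K.
  apply K. lra.
Qed.

Lemma const_deriv0' f a b :
  (forall x, derivable_pt_lim f x 0) -> f b = f a.
Proof.
  intros Hd. destruct (Rle_dec a b).
  - apply const_deriv0; auto.
  - symmetry. apply const_deriv0; auto; lra.
Qed.

Lemma dcomp_scal (F phi : R -> R) c x a l :
  derivable_pt_lim phi x a -> derivable_pt_lim F (phi x) l ->
  derivable_pt_lim (fun y => c * F (phi y)) x (c * (l * a)).
Proof.
  intros H1 H2.
  exact (derivable_pt_lim_scal (comp F phi) c x (l*a) (derivable_pt_lim_comp phi F x a l H1 H2)).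
Qed.

Lemma dlin A b x : derivable_pt_lim (fun y => (y - b) * A) x A.
Proof.
  intros eps He. exists (mkposreal 1 Rlt_0_1). intros h Hh _.
  replace (((x + h - b) * A - (x - b) * A) / h - A) with 0 by (field; auto).
  rewrite Rabs_R0. lra.
Qed.

Lemma dlin0 A x : derivable_pt_lim (fun y => y * A) x A.
Proof.
  pose proof (dlin A 0 x) as K.
  intros eps He. destruct (K eps He) as [d Hd]. exists d. intros h Hh Hh'.
  specialize (Hd h Hh Hh'). replace (x + h - 0) with (x+h) in Hd by ring.
  replace (x - 0) with x in Hd by ring. exact Hd.
Qed.

Lemma dsq (f : R -> R) x l :
  derivable_pt_lim f x l -> derivable_pt_lim (fun y => (f y) ^ 2) x (2 * f x * l).
Proof.
  intros H.
  pose proof (derivable_pt_lim_comp f (fun y => y ^ 2) x l _ H (derivable_pt_lim_pow (f x) 2)) as K.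
  replace (2 * f x * l) with (INR 2 * f x ^ Init.Nat.pred 2 * l) by (simpl; ring).
  exact K.
Qed.

Lemma drp T e t : t < T ->
  derivable_pt_lim (fun s => Rpower (T - s) e) t (- (e * Rpower (T - t) (e - 1))).
Proof.
  intros Ht.
  pose proof (derivable_pt_lim_comp (fun s => T - s) (fun x => Rpower x e) t (-1) _
     ltac:( replace (-1) with (0 - 1) by ring;
            apply (derivable_pt_lim_minus (fct_cte T) id);
            [apply derivable_pt_lim_const| apply derivable_pt_lim_id])
     (derivable_pt_lim_power (T - t) e ltac:(lra))) as K.
  replace (- (e * Rpower (T - t) (e - 1))) with (e * Rpower (T - t) (e - 1) * -1) by ring.
  exact K.
Qed.

Lemma rp_facts g tau : 0 < tau ->
  let H := Rpower tau (g / 2) in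
  0 < H /\
  Rpower tau g = H * H /\
  Rpower tau (- g) = / (H * H) /\
  Rpower tau (-1 + g / 2) = / tau * H /\
  Rpower tau (-1) = / tau /\
  Rpower tau (-1 + 2 * g) = / tau * (H * H) * (H * H) /\
  Rpower tau (-1 + g) = / tau * (H * H) /\
  Rpower tau (-1 - 1) = / tau * / tau /\
  Rpower tau (- g - 1) = / (H * H) * / tau.
Proof.
  intros Ht H.
  assert (HH : 0 < H) by (unfold H, Rpower; apply exp_pos).
  assert (E1 : Rpower tau (-1) = / tau) by (replace (-1) with (-(1)) by ring; rewrite Rpower_Ropp, Rpower_1; auto).
  assert (Eg : Rpower tau g = H * H).
  { unfold H. rewrite <- Rpower_plus. f_equal. field. }
  assert (Emg : Rpower tau (- g) = / (H * H)) by (rewrite Rpower_Ropp, Eg; auto).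
  repeat split; auto.
  - rewrite Rpower_plus, E1. reflexivity.
  - replace (-1 + 2 * g) with (-1 + g + g) by ring. rewrite !Rpower_plus, E1, Eg. ring.
  - rewrite Rpower_plus, E1, Eg. ring.
  - replace (-1 - 1) with (-1 + -1) by ring. rewrite Rpower_plus, E1. ring.
  - replace (- g - 1) with (- g + -1) by ring. rewrite Rpower_plus, E1, Emg. ring.
Qed.

Lemma small_pow g e : 0 < g -> 0 < e -> exists t0, 0 < t0 /\
  forall tau, 0 < tau <= t0 -> Rpower tau g < e.
Proof.
  intros Hg He. exists (Rpower (e/2) (1/g)). split.
  - unfold Rpower; apply exp_pos.
  - intros tau Ht.
    eapply Rle_lt_trans. apply Rle_Rpower_l. lra. exact Ht.
    rewrite Rpower_mult. replace (1 / g * g) with 1 by (field; lra).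
    rewrite Rpower_1; lra.
Qed.

Lemma rp_pos x y : 0 < Rpower x y.
Proof. unfold Rpower; apply exp_pos. Qed.

Lemma region_props gamma T (W : R -> R -> R -> Prop) : 0 < gamma -> 0 < T ->
  ((exists d, 0 < d < 1 /\ forall r z t, W r z t <-> regionC T d r z t) \/
   (exists T0 (delta : R -> R), T0 < T /\ admissible_delta gamma T T0 delta /\
      forall r z t, W r z t <-> regionW T T0 delta r z t)) ->
  (forall r z t, W r z t -> r < 1 /\ t < T) /\
  (forall r z t, W r z t -> exists e, 0 < e /\
      (forall r', Rabs (r' - r) < e -> W r' z t) /\
      (forall z', Rabs (z' - z) < e -> W r z' t) /\
      (forall t', t - e < t' <= t -> W r z t')) /\
  (forall X Y, X < 0 -> exists t1 t2, t1 < t2 /\ t2 < T /\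
      W (1 + X * Rpower (T - t1) gamma) (Y * Rpower (T - t1) gamma) t1 /\
      W (1 + X * Rpower (T - t2) gamma) (Y * Rpower (T - t2) gamma) t2 /\
      0 < 1 + X * Rpower (T - t1) gamma /\ 0 < 1 + X * Rpower (T - t2) gamma).
Proof.
  intros Hg HT Hreg.
  destruct Hreg as [[d [Hd HW]] | [T0 [delta [HT0 [Had HW]]]]].
  - split; [|split].
    + intros r z t Hw. apply HW in Hw. unfold regionC in Hw. lra.
    + intros r z t Hw. pose proof Hw as Hw'. apply HW in Hw'. unfold regionC in Hw'.
      exists (Rmin (Rmin (r - (1 - d)) (1 - r)) (Rmin (Rmin (z + d) (d - z)) (t - (T - d)))).
      assert (m1 := Rmin_l (Rmin (r - (1 - d)) (1 - r)) (Rmin (Rmin (z + d) (d - z)) (t - (T - d)))).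
      assert (m2 := Rmin_r (Rmin (r - (1 - d)) (1 - r)) (Rmin (Rmin (z + d) (d - z)) (t - (T - d)))).
      set (e := Rmin _ _) in *.
      pose proof (Rmin_l (r - (1 - d)) (1 - r)). pose proof (Rmin_r (r - (1 - d)) (1 - r)).
      pose proof (Rmin_l (Rmin (z + d) (d - z)) (t - (T - d))).
      pose proof (Rmin_r (Rmin (z + d) (d - z)) (t - (T - d))).
      pose proof (Rmin_l (z + d) (d - z)). pose proof (Rmin_r (z + d) (d - z)).
      split; [|split; [|split]].
      * unfold e; repeat apply Rmin_pos; lra.
      * intros r' Hr. apply HW. unfold regionC. apply Rabs_def2 in Hr. lra.
      * intros z' Hz. apply HW. unfold regionC. apply Rabs_def2 in Hz. lra.
      * intros t' Ht. apply HW. unfold regionC. lra.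
    + intros X Y HX.
      assert (He : 0 < d / (Rabs X + Rabs Y + 1)).
      { apply Rdiv_lt_0_compat. lra. pose proof (Rabs_pos X); pose proof (Rabs_pos Y); lra. }
      destruct (small_pow gamma _ Hg He) as [t0 [Ht0 Hsm]].
      set (tau1 := Rmin t0 (d / 2)).
      assert (Hta : 0 < tau1) by (unfold tau1; apply Rmin_pos; lra).
      assert (Htb : tau1 <= t0) by apply Rmin_l.
      assert (Htc : tau1 <= d / 2) by apply Rmin_r.
      exists (T - tau1), (T - tau1 / 2).
      replace (T - (T - tau1)) with tau1 by ring.
      replace (T - (T - tau1 / 2)) with (tau1 / 2) by ring.
      assert (Hgen : forall tau, 0 < tau <= tau1 ->
        W (1 + X * Rpower tau gamma) (Y * Rpower tau gamma) (T - tau) /\ 0 < 1 + X * Rpower tau gamma).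
      { intros tau Htau.
        assert (Hs := Hsm tau ltac:(lra)). pose proof (rp_pos tau gamma).
        set (s := Rpower tau gamma) in *.
        assert (Hxs : Rabs X * s < d /\ Rabs Y * s < d).
        { assert (Hq : (Rabs X + Rabs Y + 1) * s < d).
          { apply (Rmult_lt_compat_l (Rabs X + Rabs Y + 1)) in Hs.
            unfold Rdiv in Hs. rewrite <- Rmult_assoc, (Rmult_comm _ d), Rmult_assoc,
              Rinv_r, Rmult_1_r in Hs. exact Hs.
            pose proof (Rabs_pos X); pose proof (Rabs_pos Y); lra.
            pose proof (Rabs_pos X); pose proof (Rabs_pos Y); lra. }
          pose proof (Rabs_pos X); pose proof (Rabs_pos Y). nra. }
        rewrite Rabs_left in Hxs by lra.
        assert (-d < Y * s < d).
        { destruct (Rle_dec 0 Y). rewrite Rabs_right in Hxs by lra. nra.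
          rewrite Rabs_left in Hxs by lra. nra. }
        split; [apply HW; unfold regionC|]; repeat split; nra. }
      destruct (Hgen tau1) as [A1 B1]. lra.
      destruct (Hgen (tau1/2)) as [A2 B2]. lra.
      repeat split; auto; lra.
  - destruct Had as [Hpos [Hdecr [Hlim Hsup]]].
    split; [|split].
    + intros r z t Hw. apply HW in Hw. unfold regionW in Hw. lra.
    + intros r z t Hw. pose proof Hw as Hw'. apply HW in Hw'. unfold regionW in Hw'.
      set (dt := delta t) in *.
      exists (Rmin (Rmin (r - (1 - dt)) (1 - r)) (Rmin (Rmin (z + dt) (dt - z)) (t - T0))).
      assert (m1 := Rmin_l (Rmin (r - (1 - dt)) (1 - r)) (Rmin (Rmin (z + dt) (dt - z)) (t - T0))).
      assert (m2 := Rmin_r (Rmin (r - (1 - dt)) (1 - r)) (Rmin (Rmin (z + dt) (dt - z)) (t - T0))).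
      set (e := Rmin _ _) in *.
      pose proof (Rmin_l (r - (1 - dt)) (1 - r)). pose proof (Rmin_r (r - (1 - dt)) (1 - r)).
      pose proof (Rmin_l (Rmin (z + dt) (dt - z)) (t - T0)).
      pose proof (Rmin_r (Rmin (z + dt) (dt - z)) (t - T0)).
      pose proof (Rmin_l (z + dt) (dt - z)). pose proof (Rmin_r (z + dt) (dt - z)).
      split; [|split; [|split]].
      * unfold e; repeat apply Rmin_pos; lra.
      * intros r' Hr. apply HW. unfold regionW. apply Rabs_def2 in Hr. fold dt. lra.
      * intros z' Hz. apply HW. unfold regionW. apply Rabs_def2 in Hz. fold dt. lra.
      * intros t' Ht. apply HW. unfold regionW.
        assert (dt <= delta t').
        { destruct (Req_dec t' t) as [->|Hne]. unfold dt; lra.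
          apply Hdecr; lra. }
        lra.
    + intros X Y HX.
      destruct (Hlim 1 Rlt_0_1) as [eta0 [Heta0 Hsm]].
      set (M := Rabs X + Rabs Y).
      assert (Hgen : forall t, T0 < t < T -> T - eta0 < t ->
                Rpower (T - t) (- gamma) * delta t > M ->
         W (1 + X * Rpower (T - t) gamma) (Y * Rpower (T - t) gamma) t /\
         0 < 1 + X * Rpower (T - t) gamma).
      { intros t Ht Hte Hm.
        assert (Hd1 := Hsm t Ht Hte).
        pose proof (rp_pos (T - t) gamma).
        rewrite Rpower_Ropp in Hm. set (s := Rpower (T - t) gamma) in *.
        assert (Hq : M * s < delta t).
        { apply (Rmult_lt_compat_l s) in Hm; auto.
          rewrite <- Rmult_assoc, Rinv_r, Rmult_1_l in Hm by lra. lra. }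
        assert (Hxs : Rabs X * s <= M * s /\ Rabs Y * s <= M * s).
        { unfold M; pose proof (Rabs_pos X); pose proof (Rabs_pos Y); split; nra. }
        rewrite Rabs_left in Hxs by lra.
        assert (- delta t < Y * s < delta t).
        { destruct (Rle_dec 0 Y). rewrite Rabs_right in Hxs by lra. nra.
          rewrite Rabs_left in Hxs by lra. nra. }
        split; [apply HW; unfold regionW|]; repeat split; nra. }
      destruct (Hsup M eta0 Heta0) as [t1 [Ht1 [Ht1' Hm1]]].
      destruct (Hsup M (T - t1) ltac:(lra)) as [t2 [Ht2 [Ht2' Hm2]]].
      destruct (Hgen t1) as [A1 B1]; auto.
      destruct (Hgen t2) as [A2 B2]; auto. lra.
      exists t1, t2. repeat split; auto; lra.
Qed.

Lemma formula_r (F FR : R -> R -> R) c A z r : (r - 1) * A < 0 ->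
  (forall X Y, X < 0 -> derivable_pt_lim (fun x => F x Y) X (FR X Y)) ->
  derivable_pt_lim (fun x => c * F ((x - 1) * A) (z * A)) r (c * (FR ((r - 1) * A) (z * A) * A)).
Proof.
  intros HR Hd.
  apply (dcomp_scal (fun x => F x (z * A)) (fun x => (x - 1) * A)).
  apply dlin. apply Hd; auto.
Qed.

Lemma formula_z (F FZ : R -> R -> R) c A X z : X < 0 ->
  (forall X Y, X < 0 -> derivable_pt_lim (fun y => F X y) Y (FZ X Y)) ->
  derivable_pt_lim (fun y => c * F X (y * A)) z (c * (FZ X (z * A) * A)).
Proof.
  intros HR Hd.
  apply (dcomp_scal (fun y => F X y) (fun y => y * A)).
  apply dlin0. apply Hd; auto.
Qed.

Lemma coordX g tau X : 0 < tau -> (1 + X * Rpower tau g - 1) * Rpower tau (- g) = X.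
Proof.
  intros Ht. rewrite Rpower_Ropp. pose proof (rp_pos tau g). field. lra.
Qed.

Lemma coordY g tau Y : 0 < tau -> (Y * Rpower tau g) * Rpower tau (- g) = Y.
Proof.
  intros Ht. rewrite Rpower_Ropp. pose proof (rp_pos tau g). field. lra.
Qed.

Lemma loc_zero_deriv (f : R -> R) c x del l : 0 < del -> Rabs (x - c) < del ->
  (forall y, Rabs (y - c) < del -> f y = 0) -> derivable_pt_lim f x l -> l = 0.
Proof.
  intros Hd Hx Hz Hf.
  apply (deriv_loc_uniq f (fct_cte 0) x l 0 (del - Rabs (x - c))); [lra| |exact Hf|apply derivable_pt_lim_const].
  intros y Hy. unfold fct_cte. apply Hz.
  replace (y - c) with ((y - x) + (x - c)) by ring.
  eapply Rle_lt_trans. apply Rabs_triang. lra.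
Qed.

Lemma decay_zero (g : R -> R) c :
  (forall eps, eps > 0 -> exists M, forall Y, M < Rabs Y -> Rabs (g Y) < eps) ->
  (forall Y, g Y = c) -> c = 0.
Proof.
  intros Hd Hc. destruct (Req_dec c 0) as [|Hne]; auto. exfalso.
  assert (Hp : Rabs c > 0) by (apply Rabs_pos_lt; auto).
  destruct (Hd _ Hp) as [M HM].
  specialize (HM (Rabs M + 1)). rewrite Hc in HM.
  assert (M < Rabs (Rabs M + 1)).
  { rewrite Rabs_right. pose proof (Rle_abs M). lra. pose proof (Rabs_pos M). lra. }
  specialize (HM H). lra.
Qed.

Lemma decay_zero_sq (g : R -> R) c :
  (forall eps, eps > 0 -> exists M, forall Y, M < Rabs Y -> Rabs (g Y) < eps) ->
  (forall Y, g Y ^ 2 = c) -> c = 0.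
Proof.
  intros Hd Hc. apply (decay_zero (fun Y => g Y ^ 2)); auto.
  intros eps He. destruct (Hd (Rmin eps 1)) as [M HM].
  { apply Rmin_pos; lra. }
  exists M. intros Y HY. specialize (HM Y HY).
  pose proof (Rmin_l eps 1). pose proof (Rmin_r eps 1).
  rewrite <- RPow_abs. pose proof (Rabs_pos (g Y)).
  simpl. nra.
Qed.

Theorem theorem1 :
  forall (gamma T : R) (W : R -> R -> R -> Prop)
         (u1 w1 psi1 : R -> R -> R -> R) (U Om Psi : R -> R -> R),
  0 < gamma -> 0 < T ->
  (* W is a region of type (i) or (ii) *)
  ((exists d, 0 < d < 1 /\ forall r z t, W r z t <-> regionC T d r z t) \/
   (exists T0 (delta : R -> R), T0 < T /\ admissible_delta gamma T T0 delta /\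
      forall r z t, W r z t <-> regionW T T0 delta r z t)) ->
  (* classical solution of the system on W *)
  euler_solution_on W u1 w1 psi1 ->
  (* self-similar form on W *)
  (forall r z t, W r z t ->
     u1 r z t = Rpower (T - t) (-1 + gamma / 2)
                  * U ((r - 1) * Rpower (T - t) (- gamma)) (z * Rpower (T - t) (- gamma)) /\
     w1 r z t = Rpower (T - t) (-1)
                  * Om ((r - 1) * Rpower (T - t) (- gamma)) (z * Rpower (T - t) (- gamma)) /\
     psi1 r z t = Rpower (T - t) (-1 + 2 * gamma)
                  * Psi ((r - 1) * Rpower (T - t) (- gamma)) (z * Rpower (T - t) (- gamma))) ->
  (* smooth profiles on the closed half-plane D = {R <= 0} *)
  C2D U -> C2D Om -> C2D Psi ->
  (* decay: for each fixed R <= 0, |U| + |Om| -> 0 as |Z| -> oo *)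
  (forall X, X <= 0 -> forall eps, eps > 0 -> exists M,
     forall Y, M < Rabs Y -> Rabs (U X Y) + Rabs (Om X Y) < eps) ->
  (forall r z t, W r z t -> u1 r z t = 0 /\ w1 r z t = 0) /\
  exists a b : R,
    (forall r z t, W r z t ->
       psi1 r z t = a * Rpower (T - t) (-1 + gamma) * z + b * Rpower (T - t) (-1 + 2 * gamma)) /\
    (forall X Y, X <= 0 -> Psi X Y = a * Y + b).
Proof.
  intros gamma T W u1 w1 psi1 U Om Psi Hg HT Hreg Hsol Hss HU HOm HPsi Hdec.
  destruct (region_props gamma T W Hg HT Hreg) as [P1 [P2 P3]].
  destruct Hsol as [psir [psiz Hsol]].
  destruct HU as [UR [UZ [[HUd [HUc _]] _]]].
  destruct HOm as [OR [OZ [[HOd [HOc [_ HOZc]]] _]]].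
  destruct HPsi as [PR [PZ [[HPd [HPc _]] [[PRR [PRZ [HPRd _]]] [PZR [PZZ [HPZd _]]]]]]].
  assert (HPdr := fun X Y HX => proj1 (HPd X Y HX)).
  assert (HPdz := fun X Y HX => proj2 (HPd X Y HX)).
  assert (HPRdr := fun X Y HX => proj1 (HPRd X Y HX)).
  assert (HPZdz := fun X Y HX => proj2 (HPZd X Y HX)).
  assert (HOdr := fun X Y HX => proj1 (HOd X Y HX)).
  assert (HOdz := fun X Y HX => proj2 (HOd X Y HX)).
  assert (HUdz := fun X Y HX => proj2 (HUd X Y HX)).
  clear HPd HPRd HPZd HOd HUd.
  assert (Rneg : forall r z t, W r z t -> (r - 1) * Rpower (T - t) (- gamma) < 0).
  { intros r z t Hw. destruct (P1 _ _ _ Hw). pose proof (rp_pos (T - t) (- gamma)). nra. }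
  assert (Fpsir : forall r z t, W r z t -> psir r z t = Rpower (T - t) (-1 + 2 * gamma) *
     (PR ((r - 1) * Rpower (T - t) (- gamma)) (z * Rpower (T - t) (- gamma)) * Rpower (T - t) (- gamma))).
  { intros r z t Hw. destruct (P2 _ _ _ Hw) as [e [He [Her [Hez Het]]]].
    destruct (Hsol _ _ _ Hw) as [ut [ur [uz [wt [wr [wz [u2z [prr [pzz [Dut [Dur [Duz [Dwt [Dwr [Dwz [Du2z [Dpr [Dpz [Dprr [Dpzz Heqs]]]]]]]]]]]]]]]]]]]].
    eapply (deriv_loc_uniq _ _ r _ _ e He); [| exact Dpr | apply formula_r; [apply (Rneg _ _ _ Hw) | exact HPdr]].
    intros y Hy. exact (proj2 (proj2 (Hss y z t (Her y Hy)))). }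
  assert (Fpsiz : forall r z t, W r z t -> psiz r z t = Rpower (T - t) (-1 + 2 * gamma) *
     (PZ ((r - 1) * Rpower (T - t) (- gamma)) (z * Rpower (T - t) (- gamma)) * Rpower (T - t) (- gamma))).
  { intros r z t Hw. destruct (P2 _ _ _ Hw) as [e [He [Her [Hez Het]]]].
    destruct (Hsol _ _ _ Hw) as [ut [ur [uz [wt [wr [wz [u2z [prr [pzz [Dut [Dur [Duz [Dwt [Dwr [Dwz [Du2z [Dpr [Dpz [Dprr [Dpzz Heqs]]]]]]]]]]]]]]]]]]]].
    eapply (deriv_loc_uniq _ _ z _ _ e He); [| exact Dpz | apply formula_z; [apply (Rneg _ _ _ Hw) | exact HPdz]].
    intros y Hy. exact (proj2 (proj2 (Hss r y t (Hez y Hy)))). }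
  assert (Pois : forall r z t, W r z t ->
    let R0 := (r - 1) * Rpower (T - t) (- gamma) in
    let Z0 := z * Rpower (T - t) (- gamma) in
    PRR R0 Z0 + PZZ R0 Z0 + Om R0 Z0 + 3 * Rpower (T - t) gamma * / r * PR R0 Z0 = 0).
  { intros r z t Hw R0 Z0. destruct (P2 _ _ _ Hw) as [e [He [Her [Hez Het]]]].
    destruct (P1 _ _ _ Hw) as [Hr1 HtT].
    destruct (Hsol _ _ _ Hw) as [ut [ur [uz [wt [wr [wz [u2z [prr [pzz [Dut [Dur [Duz [Dwt [Dwr [Dwz [Du2z [Dpr [Dpz [Dprr [Dpzz Heqs]]]]]]]]]]]]]]]]]]]].
    set (A := Rpower (T - t) (- gamma)) in *.
    set (c := Rpower (T - t) (-1 + 2 * gamma)) in *.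
    assert (Eprr : prr = c * A * (PRR R0 Z0 * A)).
    { eapply (deriv_loc_uniq _ _ r _ _ e He); [| exact Dprr | apply formula_r; [apply (Rneg _ _ _ Hw) | exact HPRdr]].
      intros y Hy. cbv beta. rewrite (Fpsir y z t (Her y Hy)). fold A c. ring. }
    assert (Epzz : pzz = c * A * (PZZ R0 Z0 * A)).
    { eapply (deriv_loc_uniq _ _ z _ _ e He); [| exact Dpzz | apply formula_z; [apply (Rneg _ _ _ Hw) | exact HPZdz]].
      intros y Hy. cbv beta. rewrite (Fpsiz r y t (Hez y Hy)). fold A c. unfold R0. ring. }
    cbv zeta in Heqs. destruct Heqs as [_ [_ Hp]].
    rewrite Eprr, Epzz, (Fpsir r z t Hw), (proj1 (proj2 (Hss r z t Hw))) in Hp.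
    fold A c R0 Z0 in Hp.
    assert (Htau : 0 < T - t) by lra.
    destruct (rp_facts gamma (T - t) Htau) as [HH [E1 [E2 [E3 [E4 [E5 [E6 [E7 E8]]]]]]]].
    set (H := Rpower (T - t) (gamma / 2)) in *.
    unfold A, c in Hp. rewrite E2, E4, E5 in Hp. rewrite E1.
    set (ir := / r) in *. unfold Rdiv in Hp. fold ir in Hp.
    set (tau := T - t) in *.
    replace (PRR R0 Z0 + PZZ R0 Z0 + Om R0 Z0 + 3 * (H * H) * ir * PR R0 Z0)
      with (- tau * ((- (/ tau * (H * H) * (H * H) * / (H * H) * (PRR R0 Z0 * / (H * H)) +
       3 * ir * (/ tau * (H * H) * (H * H) * (PR R0 Z0 * / (H * H))) +
       / tau * (H * H) * (H * H) * / (H * H) * (PZZ R0 Z0 * / (H * H)))) - / tau * Om R0 Z0)).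
    rewrite Hp. ring.
    field. split; lra. }
  assert (Pfacts : forall X Y, X < 0 -> PR X Y = 0 /\ PRR X Y + PZZ X Y + Om X Y = 0).
  { intros X Y HX. destruct (P3 X Y HX) as [t1 [t2 [H12 [Ht2 [W1 [W2 [r1 r2]]]]]]].
    pose proof (Pois _ _ _ W1) as E1. pose proof (Pois _ _ _ W2) as E2. cbv zeta in E1, E2.
    rewrite coordX, coordY in E1, E2 by lra.
    assert (Hs : Rpower (T - t2) gamma < Rpower (T - t1) gamma) by (apply Rlt_Rpower_l; lra).
    set (s1 := Rpower (T - t1) gamma) in *. set (s2 := Rpower (T - t2) gamma) in *.
    assert (K : 3 * PR X Y * (s1 * / (1 + X * s1) - s2 * / (1 + X * s2)) = 0).
    { replace (3 * PR X Y * (s1 * / (1 + X * s1) - s2 * / (1 + X * s2))) with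
        ((PRR X Y + PZZ X Y + Om X Y + 3 * s1 * / (1 + X * s1) * PR X Y) -
         (PRR X Y + PZZ X Y + Om X Y + 3 * s2 * / (1 + X * s2) * PR X Y)) by ring.
      rewrite E1, E2. ring. }
    assert (K2 : s1 * / (1 + X * s1) - s2 * / (1 + X * s2) <> 0).
    { replace (s1 * / (1 + X * s1) - s2 * / (1 + X * s2)) with
        ((s1 - s2) / ((1 + X * s1) * (1 + X * s2))) by (field; lra).
      unfold Rdiv. apply Rmult_integral_contrapositive; split; [lra|]. apply Rinv_neq_0_compat. apply Rmult_integral_contrapositive; lra. }
    assert (PR X Y = 0).
    { apply Rmult_integral in K. destruct K as [K|K]; [|contradiction]. lra. }
    split; auto. rewrite H in E1. lra. }
  assert (PRRz : forall X Y, X < 0 -> PRR X Y = 0).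
  { intros X Y HX. apply (loc_zero_deriv (fun x => PR x Y) X X (- X / 2)).
    lra. rewrite Rminus_diag, Rabs_R0. lra.
    intros y Hy. apply Rabs_def2 in Hy. apply Pfacts. lra. apply HPRdr; auto. }
  assert (OmE : forall X Y, X < 0 -> Om X Y = - PZZ X Y).
  { intros X Y HX. pose proof (Pfacts X Y HX). rewrite (PRRz X Y HX) in H. lra. }
  assert (PsiX0 : forall a b Y, a <= b -> b < 0 -> Psi b Y = Psi a Y).
  { intros a b Y Hab Hb. apply (const_deriv0 (fun x => Psi x Y)); auto.
    intros x Hx. rewrite <- (proj1 (Pfacts x Y ltac:(lra))). apply HPdr. lra. }
  assert (PsiX : forall X Y, X < 0 -> Psi X Y = Psi (-1) Y).
  { intros X Y HX. destruct (Rle_dec X (-1)).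
    - symmetry; apply PsiX0; lra.
    - apply PsiX0; lra. }
  assert (PZX : forall X Y, X < 0 -> PZ X Y = PZ (-1) Y).
  { intros X Y HX. apply (deriv_loc_uniq (fun y => Psi X y) (fun y => Psi (-1) y) Y _ _ 1 Rlt_0_1).
    intros y _. apply PsiX; auto. apply HPdz; auto. apply HPdz; lra. }
  assert (PZZX : forall X Y, X < 0 -> PZZ X Y = PZZ (-1) Y).
  { intros X Y HX. apply (deriv_loc_uniq (fun y => PZ X y) (fun y => PZ (-1) y) Y _ _ 1 Rlt_0_1).
    intros y _. apply PZX; auto. apply HPZdz; auto. apply HPZdz; lra. }
  assert (OmX : forall X Y, X < 0 -> Om X Y = Om (-1) Y).
  { intros X Y HX. rewrite !OmE, PZZX; auto; lra. }
  assert (ORz : forall X Y, X < 0 -> OR X Y = 0).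
  { intros X Y HX. symmetry.
    apply (deriv_loc_uniq (fct_cte (Om (-1) Y)) (fun x => Om x Y) X _ _ (- X / 2)). lra.
    intros y Hy. apply Rabs_def2 in Hy. unfold fct_cte. symmetry. apply OmX. lra.
    apply derivable_pt_lim_const. apply HOdr; auto. }
  assert (OZX : forall X Y, X < 0 -> OZ X Y = OZ (-1) Y).
  { intros X Y HX. apply (deriv_loc_uniq (fun y => Om X y) (fun y => Om (-1) y) Y _ _ 1 Rlt_0_1).
    intros y _. apply OmX; auto. apply HOdz; auto. apply HOdz; lra. }
  assert (Weq : forall r z t, W r z t ->
    let R0 := (r - 1) * Rpower (T - t) (- gamma) in
    let Z0 := z * Rpower (T - t) (- gamma) in
    Om R0 Z0 + gamma * Z0 * OZ R0 Z0 + 2 * Rpower (T - t) gamma * Psi R0 Z0 * OZ R0 Z0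
      = 2 * U R0 Z0 * UZ R0 Z0).
  { intros r z t Hw R0 Z0. destruct (P2 _ _ _ Hw) as [e [He [Her [Hez Het]]]].
    destruct (P1 _ _ _ Hw) as [Hr1 HtT].
    pose proof (Rneg _ _ _ Hw) as HR0. fold R0 in HR0.
    destruct (Hsol _ _ _ Hw) as [ut [ur [uz [wt [wr [wz [u2z [prr [pzz [Dut [Dur [Duz [Dwt [Dwr [Dwz [Du2z [Dpr [Dpz [Dprr [Dpzz Heqs]]]]]]]]]]]]]]]]]]]].
    set (A := Rpower (T - t) (- gamma)) in *.
    set (cu := Rpower (T - t) (-1 + gamma / 2)) in *.
    set (cw := Rpower (T - t) (-1)) in *.
    set (c := Rpower (T - t) (-1 + 2 * gamma)) in *.
    assert (Ewr : wr = cw * (OR R0 Z0 * A)).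
    { eapply (deriv_loc_uniq _ _ r _ _ e He); [| exact Dwr | apply formula_r; [exact HR0 | exact HOdr]].
      intros y Hy. exact (proj1 (proj2 (Hss y z t (Her y Hy)))). }
    assert (Ewz : wz = cw * (OZ R0 Z0 * A)).
    { eapply (deriv_loc_uniq _ _ z _ _ e He); [| exact Dwz | apply formula_z; [exact HR0 | exact HOdz]].
      intros y Hy. exact (proj1 (proj2 (Hss r y t (Hez y Hy)))). }
    assert (Eu2z : u2z = 2 * (cu * U R0 Z0) * (cu * (UZ R0 Z0 * A))).
    { eapply (deriv_loc_uniq _ _ z _ _ e He); [| exact Du2z |
        apply (dsq (fun y => cu * U R0 (y * A))); apply formula_z; [exact HR0 | exact HUdz]].
      intros y Hy. cbv beta. rewrite (proj1 (Hss r y t (Hez y Hy))). reflexivity. }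
    assert (D1 := drp T (-1) t HtT).
    assert (D2a := derivable_pt_lim_scal (fun s => Rpower (T - s) (- gamma)) z t _ (drp T (- gamma) t HtT)).
    assert (D2b := HOdz (-1) (z * Rpower (T - t) (- gamma)) ltac:(lra)).
    assert (D2 := derivable_pt_lim_comp (fun s => z * Rpower (T - s) (- gamma)) (fun y => Om (-1) y) t _ _ D2a D2b).
    assert (Dg := derivable_pt_lim_mult (fun s => Rpower (T - s) (-1)) (comp (fun y => Om (-1) y) (fun s => z * Rpower (T - s) (- gamma))) t _ _ D1 D2).
    assert (Ewt := deriv_left_uniq _ _ t _ _ e He
       ltac:(intros y Hy; pose proof (Het y Hy) as Hw'; unfold mult_fct, comp;
             rewrite (proj1 (proj2 (Hss r z y Hw'))); rewrite (OmX _ _ (Rneg _ _ _ Hw')); reflexivity)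
       Dwt Dg).
    cbv zeta in Heqs. destruct Heqs as [_ [Hw2 _]].
    rewrite Ewt, Ewr, Ewz, Eu2z, (Fpsiz r z t Hw), (Fpsir r z t Hw), (proj2 (proj2 (Hss r z t Hw))) in Hw2.
    fold A c R0 Z0 in Hw2. fold A cw in Hw2.
    rewrite (ORz _ _ HR0), (proj1 (Pfacts _ _ HR0)) in Hw2.
    unfold comp in Hw2. cbv beta in Hw2. fold A Z0 in Hw2.
    rewrite (OmX _ _ HR0). rewrite (OZX _ _ HR0) in Hw2 |- *.
    assert (Htau : 0 < T - t) by lra.
    destruct (rp_facts gamma (T - t) Htau) as [HH [E1 [E2 [E3 [E4 [E5 [E6 [E7 E8]]]]]]]].
    set (om := Om (-1) Z0) in *. set (oz := OZ (-1) Z0) in *. set (ps := Psi R0 Z0) in *.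
    set (uu := U R0 Z0) in *. set (uzz := UZ R0 Z0) in *. set (pz := PZ R0 Z0) in *.
    assert (EZ : Z0 = z * / (Rpower (T - t) (gamma / 2) * Rpower (T - t) (gamma / 2))).
    { unfold Z0. fold A. unfold A. rewrite E2. reflexivity. }
    rewrite EZ. unfold cu, cw, c, A in Hw2.
    rewrite E1. rewrite E2, E3, E4, E5, E7, E8 in Hw2.
    set (H := Rpower (T - t) (gamma / 2)) in *. set (tau := T - t) in *.
    match type of Hw2 with ?L = ?Rr =>
      apply Rminus_diag_uniq; transitivity (tau * tau * (L - Rr)); [field; split; lra | rewrite Hw2; ring] end. }
  assert (Wfacts : forall X Y, X < 0 -> Psi X Y * OZ X Y = 0 /\
             Om X Y + gamma * Y * OZ X Y = 2 * U X Y * UZ X Y).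
  { intros X Y HX. destruct (P3 X Y HX) as [t1 [t2 [H12 [Ht2 [W1 [W2 [r1 r2]]]]]]].
    pose proof (Weq _ _ _ W1) as E1. pose proof (Weq _ _ _ W2) as E2. cbv zeta in E1, E2.
    rewrite coordX, coordY in E1, E2 by lra.
    assert (Hs : Rpower (T - t2) gamma < Rpower (T - t1) gamma) by (apply Rlt_Rpower_l; lra).
    set (s1 := Rpower (T - t1) gamma) in *. set (s2 := Rpower (T - t2) gamma) in *.
    assert (K : 2 * (s1 - s2) * (Psi X Y * OZ X Y) = 0).
    { replace (2 * (s1 - s2) * (Psi X Y * OZ X Y)) with
        ((Om X Y + gamma * Y * OZ X Y + 2 * s1 * Psi X Y * OZ X Y) -
         (Om X Y + gamma * Y * OZ X Y + 2 * s2 * Psi X Y * OZ X Y)) by ring.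
      rewrite E1, E2. ring. }
    assert (K' : Psi X Y * OZ X Y = 0).
    { apply Rmult_integral in K. destruct K as [K|K]; auto. lra. }
    split; auto. rewrite <- E2. replace (2 * s2 * Psi X Y * OZ X Y) with (2 * s2 * (Psi X Y * OZ X Y)) by ring.
    rewrite K'. ring. }
  assert (OZ0 : forall X Y, X < 0 -> OZ X Y = 0).
  { intros X Y HX. rewrite OZX by auto.
    destruct (Req_dec (OZ (-1) Y) 0) as [|Hne]; auto. exfalso.
    assert (Hp : Rabs (OZ (-1) Y) / 2 > 0).
    { assert (0 < Rabs (OZ (-1) Y)) by (apply Rabs_pos_lt; auto). lra. }
    destruct (HOZc (-1) Y ltac:(lra) _ Hp) as [del [Hdel Hc]].
    assert (Psi0 : forall y, Rabs (y - Y) < del -> Psi (-1) y = 0).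
    { intros y Hy.
      specialize (Hc (-1) y ltac:(lra) ltac:(rewrite Rminus_diag_eq, Rabs_R0; lra) Hy).
      assert (OZ (-1) y <> 0).
      { intro Hz. rewrite Hz, Rminus_0_l, Rabs_Ropp in Hc. lra. }
      destruct (Wfacts (-1) y ltac:(lra)) as [K _]. apply Rmult_integral in K.
      destruct K; auto; contradiction. }
    assert (PZ0 : forall y, Rabs (y - Y) < del -> PZ (-1) y = 0).
    { intros y Hy. apply (loc_zero_deriv (fun y => Psi (-1) y) Y y del); auto. apply HPdz; lra. }
    assert (PZZ0 : forall y, Rabs (y - Y) < del -> PZZ (-1) y = 0).
    { intros y Hy. apply (loc_zero_deriv (fun y => PZ (-1) y) Y y del); auto. apply HPZdz; lra. }
    assert (Om0 : forall y, Rabs (y - Y) < del -> Om (-1) y = 0).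
    { intros y Hy. rewrite OmE, PZZ0; auto. ring. lra. }
    apply Hne. apply (loc_zero_deriv (fun y => Om (-1) y) Y Y del); auto.
    rewrite Rminus_diag_eq, Rabs_R0; lra. apply HOdz; lra. }
  assert (Om0 : forall X Y, X < 0 -> Om X Y = 0).
  { intros X Y HX.
    assert (Hc : forall y, Om X y = Om X 0).
    { intro y. apply (const_deriv0' (fun y => Om X y)). intro x. rewrite <- (OZ0 X x HX). apply HOdz; auto. }
    rewrite Hc. apply (decay_zero (fun y => Om X y)); auto.
    intros eps He. destruct (Hdec X ltac:(lra) eps He) as [M HM]. exists M. intros y Hy.
    specialize (HM y Hy). pose proof (Rabs_pos (U X y)). lra. }
  assert (U0 : forall X Y, X < 0 -> U X Y = 0).
  { intros X Y HX.
    assert (Hd : forall y, derivable_pt_lim (fun y => U X y ^ 2) y 0).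
    { intro y. assert (E : 2 * U X y * UZ X y = 0).
      { destruct (Wfacts X y HX) as [_ K]. rewrite Om0, OZ0 in K by auto. lra. }
      pose proof (dsq (fun y => U X y) y _ (HUdz X y HX)) as D. cbv beta in D. rewrite E in D. exact D. }
    assert (Hc : forall y, U X y ^ 2 = U X 0 ^ 2).
    { intro y. apply (const_deriv0' (fun y => U X y ^ 2)); auto. }
    assert (H0 : U X 0 ^ 2 = 0).
    { apply (decay_zero_sq (fun y => U X y)); auto.
      intros eps He. destruct (Hdec X ltac:(lra) eps He) as [M HM]. exists M. intros y Hy.
      specialize (HM y Hy). pose proof (Rabs_pos (Om X y)). lra. }
    rewrite <- (Hc Y) in H0. simpl in H0. nra. }
  set (a := PZ (-1) 0). set (b := Psi (-1) 0).
  assert (PZc : forall y, PZ (-1) y = a).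
  { intro y. apply (const_deriv0' (fun y => PZ (-1) y)). intro x.
    assert (E : PZZ (-1) x = 0).
    { assert (K := OmE (-1) x ltac:(lra)). rewrite Om0 in K by lra. lra. }
    pose proof (HPZdz (-1) x ltac:(lra)) as D. rewrite E in D. exact D. }
  assert (Psilin : forall y, Psi (-1) y = a * y + b).
  { intro y.
    assert (Hc : (fun y => Psi (-1) y - y * a) y = (fun y => Psi (-1) y - y * a) 0).
    { apply (const_deriv0' (fun y => Psi (-1) y - y * a)). intro x.
      pose proof (derivable_pt_lim_minus (fun y => Psi (-1) y) (fun y => y * a) x _ _
                   (HPdz (-1) x ltac:(lra)) (dlin0 a x)) as D.
      rewrite PZc in D. replace (a - a) with 0 in D by ring. exact D. }
    cbv beta in Hc. unfold b. lra. }
  assert (PsiD : forall X Y, X <= 0 -> Psi X Y = a * Y + b).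
  { intros X Y HX. destruct (Rle_lt_or_eq_dec X 0 HX) as [HX'|HX'].
    - rewrite PsiX by auto. apply Psilin.
    - subst X. destruct (Req_dec (Psi 0 Y) (a * Y + b)) as [|Hne]; auto. exfalso.
      assert (Hp : Rabs (Psi 0 Y - (a * Y + b)) > 0) by (apply Rabs_pos_lt; lra).
      destruct (HPc 0 Y ltac:(lra) _ Hp) as [del [Hdel Hc]].
      specialize (Hc (- del / 2) Y ltac:(lra)).
      rewrite Rminus_0_r, (Rminus_diag_eq Y Y), Rabs_R0 in Hc by reflexivity.
      rewrite Rabs_left in Hc by lra. specialize (Hc ltac:(lra) Hdel).
      rewrite PsiX, Psilin in Hc by lra.
      rewrite <- Rabs_Ropp in Hc. replace (- (a * Y + b - Psi 0 Y)) with (Psi 0 Y - (a * Y + b)) in Hc by ring.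
      lra. }
  split.
  - intros r z t Hw. destruct (Hss r z t Hw) as [E1 [E2 _]]. pose proof (Rneg _ _ _ Hw) as HR0.
    rewrite E1, E2, U0, Om0 by auto. split; ring.
  - exists a, b. split; auto.
    intros r z t Hw. rewrite (proj2 (proj2 (Hss _ _ _ Hw))). rewrite PsiD by (pose proof (Rneg _ _ _ Hw); lra).
    destruct (P1 _ _ _ Hw) as [_ HtT]. assert (Htau : 0 < T - t) by lra.
    destruct (rp_facts gamma (T - t) Htau) as [HH [E1 [E2 [E3 [E4 [E5 [E6 [E7 E8]]]]]]]].
    rewrite E2, E5, E6. field. lra.
Qed.
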